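(* Let $G=(V,E)$ be a finite, connected, undirected graph with $n\ge 2$ vertices. Then for every $r\ge 1$, the fixation probability satisfies $f_{G,r}\ge \frac{1}{n}$.
   Context: The Moran process on $G$ with mutant fitness $r>0$ is the Markov chain $(X_i)_{i\ge0}$ whose state $X_i\subseteq V$ is the set of vertices occupied by mutants; every other vertex is occupied by a non-mutant of fitness $1$. Write $W(S)=r|S|+|V\setminus S|$ for the total fitness. Given $X_i=S$, one step is: choose a vertex $x$ with probability $r/W(S)$ if $x\in S$ and $1/W(S)$ if $x\notin S$; then choose a neighbour $y$ of $x$ uniformly at random; set $X_{i+1}=S\cup\{y\}$ if $x\in S$ and $X_{i+1}=S\setminus\{y\}$ if $x\notin S$. Fixation means $X_i=V$ for some $i$. For $x\in V$, $f_{G,r}(x)$ is the probability of fixation when $X_0=\{x\}$, and $f_{G,r}=\frac1n\sum_{x\in V}f_{G,r}(x)$ is the fixation probability when the initial single mutant is placed at a uniformly random vertex. *)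

(* Defs.v *)
From mathcomp Require Import all_boot.
From Stdlib Require Import Reals ClassicalEpsilon.
Set Implicit Arguments. Unset Strict Implicit. Unset Printing Implicit Defensive.

Section Moran.
Variables (T : finType) (e : rel T) (r : R).

Definition deg (x : T) : nat := #|[set y | e x y]|.

Definition fitness (S : {set T}) : R :=
  (r * INR #|S| + INR #|~: S|)%R.

(* state after reproducer x places offspring on neighbour y *)
Definition moran_next (S : {set T}) (x y : T) : {set T} :=
  if x \in S then y |: S else S :\ y.

Definition moran_trans (S S' : {set T}) : R :=
  \big[Rplus/0%R]_(x : T)
    \big[Rplus/0%R]_(y : T | e x y)
      ((if x \in S then r else 1%R) / fitness S / INR (deg x)
        * (if S' == moran_next S x y then 1%R else 0%R))%R.

Fixpoint moran_dist (x0 : T) (t : nat) (S' : {set T}) : R :=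
  match t with
  | 0 => if S' == [set x0] then 1%R else 0%R
  | t.+1 => \big[Rplus/0%R]_(S : {set T}) (moran_dist x0 t S * moran_trans S S')%R
  end.

(* f_{G,r}(x): probability that X_i = V for some i.  Since V is absorbing,
   the events {X_t = V} increase in t, so this is sup_t P(X_t = V). *)
Definition fixprob_at (x : T) : R :=
  epsilon (inhabits 0%R)
    (fun l => is_lub (fun p => exists t, p = moran_dist x t [set: T]) l).

Definition fixprob : R :=
  (/ INR #|T| * \big[Rplus/0%R]_(x : T) fixprob_at x)%R.

End Moran.

(* Main.v *)
Require Import Defs.
From mathcomp Require Import all_boot.
From Stdlib Require Import Reals.
From HB Require Import structures.
From Stdlib Require Import Lra ClassicalEpsilon.
Open Scope R_scope.

HB.instance Definition _ := Monoid.isComLaw.Build R 0%R Rplus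
  (fun a b c => esym (Rplus_assoc a b c)) Rplus_comm Rplus_0_l.

Lemma sumR_le (I : finType) (P : pred I) (F G : I -> R) :
  (forall i, P i -> F i <= G i) ->
  \big[Rplus/0]_(i | P i) F i <= \big[Rplus/0]_(i | P i) G i.
Proof.
move=> H; apply: (big_rec2 (fun a b => a <= b)); first lra.
move=> i a b Pi Hab; have := H i Pi; lra.
Qed.

Lemma sumR_ge0 (I : finType) (P : pred I) (F : I -> R) :
  (forall i, P i -> 0 <= F i) -> 0 <= \big[Rplus/0]_(i | P i) F i.
Proof.
move=> H; apply: (big_rec (fun a => 0 <= a)); first lra.
move=> i a Pi Ha; have := H i Pi; lra.
Qed.

Lemma sumR_scale (I : finType) (P : pred I) (F : I -> R) c :
  \big[Rplus/0]_(i | P i) (c * F i) = c * \big[Rplus/0]_(i | P i) F i.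
Proof.
apply: (big_rec2 (fun a b => a = c * b)); first lra.
by move=> i a b _ ->; lra.
Qed.

Lemma sumR_scaler (I : finType) (P : pred I) (F : I -> R) c :
  \big[Rplus/0]_(i | P i) (F i * c) = \big[Rplus/0]_(i | P i) F i * c.
Proof.
rewrite Rmult_comm -sumR_scale; apply: eq_bigr => i _; lra.
Qed.

Lemma sumR_add (I : finType) (P : pred I) (F G : I -> R) :
  \big[Rplus/0]_(i | P i) (F i + G i) =
  \big[Rplus/0]_(i | P i) F i + \big[Rplus/0]_(i | P i) G i.
Proof. exact: big_split. Qed.

Lemma sumR_single (I : finType) (P : pred I) (F : I -> R) j :
  P j -> (forall i, P i -> 0 <= F i) -> F j <= \big[Rplus/0]_(i | P i) F i.
Proof.
move=> Pj H; rewrite (bigD1 j) //=.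
have : 0 <= \big[Rplus/0]_(i | P i && (i != j)) F i.
  by apply: sumR_ge0 => i /andP [Pi _]; apply: H.
lra.
Qed.

Lemma sumR_pick (I : finType) (j : I) (F : I -> R) :
  \big[Rplus/0]_i ((if i == j then 1 else 0) * F i) = F j.
Proof.
rewrite (bigD1 j) //= eqxx big1 ?Rplus_0_r ?Rmult_1_l //.
by move=> i /negbTE ->; rewrite Rmult_0_l.
Qed.

Lemma sumR_const (I : finType) (P : pred I) c :
  \big[Rplus/0]_(i | P i) c = INR #|[set i | P i]| * c.
Proof.
rewrite -(sum1dep_card P).
rewrite (big_morph INR (id1 := 0) (op1 := Rplus)); first last.
- by [].
- by move=> a b; rewrite plus_INR.
rewrite -sumR_scaler; apply: eq_bigr => i _ /=; lra.
Qed.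

Section M.
Variables (T : finType) (e : rel T) (r : R).
Hypothesis e_sym : symmetric e.
Hypothesis e_conn : forall x y : T, connect e x y.
Hypothesis n_ge2 : (2 <= #|T|)%nat.
Hypothesis r_ge1 : 1 <= r.

Lemma boundary (S : {set T}) : S != set0 -> S != setT ->
  exists x y, [/\ x \in S, y \notin S & e x y].
Proof.
move=> /set0Pn [x xS] nT.
have [y yS] : exists y, y \notin S.
  apply: NNPP => H; move/eqP: nT; apply; apply/setP => z; rewrite inE.
  by apply/negPn/negP => zS; apply: H; exists z.
apply: NNPP => H.
have cl : closed e S.
  move=> a b eab; apply/idP/idP => Ha.
  - apply/negPn/negP => Hb; apply: H; by exists a, b.
  - apply/negPn/negP => Hb; apply: H; exists b, a; split=> //; by rewrite e_sym.
by move: (closed_connect cl (e_conn x y)); rewrite xS (negbTE yS).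
Qed.

Lemma deg_pos x : (0 < deg e x)%nat.
Proof.
have h1 : [set x] != set0 by apply/set0Pn; exists x; rewrite inE.
have h2 : [set x] != setT.
  apply/eqP => H; move: n_ge2; rewrite -cardsT -H cards1.
  by [].
have [a [b [ax bx eab]]] := boundary _ h1 h2.
move: ax eab; rewrite inE => /eqP -> eab.
by rewrite /deg; apply/card_gt0P; exists b; rewrite inE.
Qed.

Lemma deg_le x : (deg e x <= #|T|)%nat.
Proof. exact: max_card. Qed.

Lemma degR_pos x : 0 < INR (deg e x).
Proof. apply: lt_0_INR; apply/ltP; exact: deg_pos. Qed.

Lemma degR_le x : INR (deg e x) <= INR #|T|.
Proof. apply: le_INR; apply/leP; exact: deg_le. Qed.

Lemma nR_pos : 0 < INR #|T|.
Proof. apply: lt_0_INR; apply/ltP; by apply: leq_trans n_ge2. Qed.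

Lemma fit_bounds (S : {set T}) : INR #|T| <= fitness r S <= r * INR #|T|.
Proof.
rewrite /fitness -(cardsC S) plus_INR.
have := pos_INR #|S|; have := pos_INR #|~: S|. nra.
Qed.

Lemma fit_pos (S : {set T}) : 0 < fitness r S.
Proof. have := fit_bounds S; have := nR_pos; lra. Qed.

Definition w (S : {set T}) x := if x \in S then r else 1.
Definition c (S : {set T}) x := w S x / fitness r S / INR (deg e x).
Definition G (S : {set T}) (h : {set T} -> R) :=
  \big[Rplus/0]_x \big[Rplus/0]_(y | e x y) (c S x * h (moran_next S x y)).

Lemma c_pos S x : 0 < c S x.
Proof.
rewrite /c /w; have := fit_pos S; have := degR_pos x.
case: (x \in S) => Hd Hf; apply: Rdiv_lt_0_compat => //;
  apply: Rdiv_lt_0_compat => //; lra.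
Qed.

Lemma trans_sum S h :
  \big[Rplus/0]_S' (moran_trans e r S S' * h S') = G S h.
Proof.
rewrite /moran_trans /G.
under eq_bigr => S' _ do rewrite -sumR_scaler.
rewrite exchange_big; apply: eq_bigr => x _.
under eq_bigr => S' _ do rewrite -sumR_scaler.
rewrite exchange_big; apply: eq_bigr => y _.
rewrite -(sumR_pick _ (moran_next S x y) (fun S' => c S x * h S')).
apply: eq_bigr => S0 _; rewrite /c /w; set A := (if S0 == _ then _ else _); set B := (_ / _ / _); set C := h S0; ring.
Qed.

Lemma rowsum (S : {set T}) : G S (fun _ => 1) = 1.
Proof.
rewrite /G.
transitivity (\big[Rplus/0]_x (w S x * / fitness r S)).
  apply: eq_bigr => x _.
  rewrite (eq_bigr (fun=> c S x)); last by move=> y _; rewrite Rmult_1_r.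
  rewrite sumR_const /c; have := degR_pos x; rewrite /deg => Hd.
  have := fit_pos S => Hf.
  field; lra.
rewrite sumR_scaler (bigID (fun x => x \in S)) /=.
rewrite (eq_bigr (fun=> r)); last by move=> x xS; rewrite /w xS.
rewrite [X in _ + X](eq_bigr (fun=> 1)); last by move=> x /negbTE xS; rewrite /w xS.
rewrite !sumR_const.
have -> : [set x | x \in S] = S by apply/setP => z; rewrite inE.
have -> : [set x | x \notin S] = ~: S by apply/setP => z; rewrite !inE.
rewrite /fitness; have := fit_pos S; rewrite /fitness => Hf; field; lra.
Qed.

Lemma Gdecomp (S : {set T}) h : G S h = h S +
  \big[Rplus/0]_x \big[Rplus/0]_(y | e x y) (c S x * (h (moran_next S x y) - h S)).
Proof.
have R1 := rowsum S.
transitivity (h S * G S (fun=> 1) + 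
  \big[Rplus/0]_x \big[Rplus/0]_(y | e x y) (c S x * (h (moran_next S x y) - h S)));
  last by rewrite R1 Rmult_1_r.
rewrite /G -sumR_scale -sumR_add; apply: eq_bigr => x _.
rewrite -sumR_scale -sumR_add; apply: eq_bigr => y _; ring.
Qed.

Definition phi (S : {set T}) := \big[Rplus/0]_(z in S) / INR (deg e z).

Lemma inv_deg_pos z : 0 < / INR (deg e z).
Proof. apply: Rinv_0_lt_compat; exact: degR_pos. Qed.

Lemma phi_add y (S : {set T}) : y \notin S -> phi (y |: S) = / INR (deg e y) + phi S.
Proof. by move=> yS; rewrite /phi big_setU1. Qed.

Lemma phi_del y (S : {set T}) : y \in S -> phi (S :\ y) = phi S - / INR (deg e y).
Proof.
move=> yS; rewrite -{2}(setD1K yS) phi_add ?setD11 //; lra.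
Qed.

Lemma phi_ge0 (S : {set T}) : 0 <= phi S.
Proof. apply: sumR_ge0 => z _; apply: Rlt_le; exact: inv_deg_pos. Qed.

Lemma phi_leT (S : {set T}) : phi S <= phi setT.
Proof.
rewrite /phi (big_mkcond (fun z => z \in S)) (big_mkcond (fun z => z \in setT)).
apply: sumR_le => z _; rewrite in_setT; case: (z \in S); first lra.
apply: Rlt_le; exact: inv_deg_pos.
Qed.

Lemma dphi (S : {set T}) x y : phi (moran_next S x y) - phi S =
  if x \in S then (if y \in S then 0 else / INR (deg e y))
  else (if y \in S then - / INR (deg e y) else 0).
Proof.
rewrite /moran_next; case: (x \in S); case yS: (y \in S).
- have -> : y |: S = S by apply/setP => z; rewrite !inE; case: eqP => // ->.
  lra.
- rewrite phi_add ?yS //; lra.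
- rewrite phi_del //; lra.
- have -> : S :\ y = S.
    apply/setP => z; rewrite !inE; case: eqP => // ->; by rewrite yS.
  lra.
Qed.

Definition D1 (S : {set T}) := \big[Rplus/0]_x \big[Rplus/0]_(y | e x y)
   (c S x * (phi (moran_next S x y) - phi S)).

Lemma cross_pos (S : {set T}) a b : 0 < a -> 0 < b ->
  0 <= r / fitness r S / a * / b + 1 / fitness r S / b * - / a.
Proof.
move=> Ha Hb; have Hf := fit_pos S.
replace (r / fitness r S / a * / b + 1 / fitness r S / b * - / a)
  with ((r - 1) * (/ fitness r S * / a * / b)) by (field; lra).
apply: Rmult_le_pos; first lra.
apply: Rlt_le; repeat apply: Rmult_lt_0_compat; apply: Rinv_0_lt_compat => //.
Qed.

Lemma D1_ge0 (S : {set T}) : 0 <= D1 S.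
Proof.
rewrite /D1.
under eq_bigr => x _ do rewrite big_mkcond.
set f := fun x y => if e x y then c S x * (phi (moran_next S x y) - phi S) else 0.
change (0 <= \big[Rplus/0]_x \big[Rplus/0]_y f x y).
have sw : \big[Rplus/0]_x \big[Rplus/0]_y f x y = \big[Rplus/0]_x \big[Rplus/0]_y f y x.
  by rewrite exchange_big.
have : 0 <= \big[Rplus/0]_x \big[Rplus/0]_y (f x y + f y x).
  apply: sumR_ge0 => x _; apply: sumR_ge0 => y _.
  rewrite /f (e_sym y x); case: (e x y); last lra.
  rewrite /c /w !dphi; have Hx := degR_pos x; have Hy := degR_pos y.
  case xS : (x \in S); case yS : (y \in S).
  - lra.
  - exact: cross_pos.
  - rewrite Rplus_comm; exact: cross_pos.
  - lra.
under eq_bigr => x _ do rewrite sumR_add.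
rewrite sumR_add -sw; lra.
Qed.

Definition tr (S : {set T}) : R := if (S != set0) && (S != setT) then 1 else 0.

Lemma bound_term (S : {set T}) x y :
  / INR #|T| ^ 4 <= r / fitness r S / INR (deg e x) * (/ INR (deg e y)) ^ 2.
Proof.
have Fp := fit_pos S; have [_ Fle] := fit_bounds S; have np := nR_pos.
have dxp := degR_pos x; have dyp := degR_pos y.
have dxl := degR_le x; have dyl := degR_le y.
have ip : 0 < / INR #|T| by apply: Rinv_0_lt_compat.
have h1 : / INR #|T| <= r / fitness r S.
  have h : / (r * INR #|T|) <= / fitness r S by apply: Rinv_le_contravar.
  replace (/ INR #|T|) with (r * / (r * INR #|T|)) by (field; lra).
  apply: Rmult_le_compat_l; lra.
have h2 : / INR #|T| <= / INR (deg e x) by apply: Rinv_le_contravar.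
have h3 : / INR #|T| <= / INR (deg e y) by apply: Rinv_le_contravar.
replace (/ INR #|T| ^ 4) with ((/ INR #|T| * / INR #|T|) * (/ INR #|T|) ^ 2)
  by (field; lra).
apply: Rmult_le_compat.
- apply: Rmult_le_pos; lra.
- apply: pow_le; lra.
- apply: Rmult_le_compat; lra.
- apply: pow_incr; lra.
Qed.

Lemma G_sq (S : {set T}) :
  phi S ^ 2 + / INR #|T| ^ 4 * tr S <= G S (fun S => phi S ^ 2).
Proof.
rewrite Gdecomp.
set g := fun x y => c S x * (phi (moran_next S x y) - phi S) ^ 2.
have E : \big[Rplus/0]_x \big[Rplus/0]_(y | e x y)
      (c S x * (phi (moran_next S x y) ^ 2 - phi S ^ 2)) =
    \big[Rplus/0]_x \big[Rplus/0]_(y | e x y) g x y + 2 * phi S * D1 S.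
  rewrite /D1 -sumR_scale -sumR_add; apply: eq_bigr => x _.
  rewrite -sumR_scale -sumR_add; apply: eq_bigr => y _; rewrite /g; ring.
rewrite E.
have HD := D1_ge0 S; have Hp := phi_ge0 S.
have Hg : forall x y, 0 <= g x y.
  move=> x y; apply: Rmult_le_pos; [apply: Rlt_le; exact: c_pos | apply: pow2_ge_0].
have H2 : 0 <= 2 * phi S * D1 S by apply: Rmult_le_pos; lra.
suff : / INR #|T| ^ 4 * tr S <= \big[Rplus/0]_x \big[Rplus/0]_(y | e x y) g x y by lra.
rewrite /tr; case: ifP => [/andP [h0 hT] | _].
- have [x [y [xS yS exy]]] := boundary _ h0 hT.
  apply: (Rle_trans _ (\big[Rplus/0]_(y | e x y) g x y)).
  + apply: (Rle_trans _ (g x y)).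
    * rewrite Rmult_1_r /g /c /w xS.
      have -> : phi (moran_next S x y) - phi S = / INR (deg e y)
        by rewrite dphi xS (negbTE yS).
      exact: bound_term.
    * by apply: sumR_single => // ? _; apply: Hg.
  + apply: (sumR_single _ _ (fun x => \big[Rplus/0]_(y | e x y) g x y) x) => // ? _.
    apply: sumR_ge0 => ? _; apply: Hg.
- rewrite Rmult_0_r; apply: sumR_ge0 => ? _; apply: sumR_ge0 => ? _; apply: Hg.
Qed.

Lemma phi_T_pos : 0 < phi setT.
Proof.
have [x0 _] : exists x : T, x \in T by apply/card_gt0P; apply: leq_trans n_ge2.
apply: (Rlt_le_trans _ (phi [set x0])); last exact: phi_leT.
rewrite /phi big_set1; exact: inv_deg_pos.
Qed.

Section Proc.
Variable x0 : T.

Definition E t (h : {set T} -> R) :=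
  \big[Rplus/0]_S (moran_dist e r x0 t S * h S).

Lemma dist_S t S' : moran_dist e r x0 t.+1 S' =
  \big[Rplus/0]_S (moran_dist e r x0 t S * moran_trans e r S S').
Proof. by []. Qed.

Lemma trans_ge0 S S' : 0 <= moran_trans e r S S'.
Proof.
apply: sumR_ge0 => x _; apply: sumR_ge0 => y _; apply: Rmult_le_pos.
- apply: Rlt_le; exact: (c_pos S x).
- case: (_ == _); lra.
Qed.

Lemma p_ge0 t S : 0 <= moran_dist e r x0 t S.
Proof.
elim: t S => [|t IH] S.
- rewrite /=; case: (_ == _); lra.
- rewrite dist_S; apply: sumR_ge0 => S0 _; apply: Rmult_le_pos => //; exact: trans_ge0.
Qed.

Lemma E_step t h : E t.+1 h = \big[Rplus/0]_S (moran_dist e r x0 t S * G S h).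
Proof.
rewrite /E.
under eq_bigr => S' _ do rewrite dist_S -sumR_scaler.
rewrite exchange_big; apply: eq_bigr => S _.
rewrite -trans_sum -sumR_scale; apply: eq_bigr => S' _; ring.
Qed.

Lemma E_one t : E t (fun=> 1) = 1.
Proof.
elim: t => [|t IH].
- exact: (sumR_pick _ [set x0] (fun=> 1)).
- rewrite E_step -[RHS]IH; apply: eq_bigr => S _; by rewrite rowsum.
Qed.

Lemma E_mono t h g : (forall S, h S <= g S) -> E t h <= E t g.
Proof.
move=> H; apply: sumR_le => S _; apply: Rmult_le_compat_l; [exact: p_ge0 | exact: H].
Qed.

Lemma E_const t k : E t (fun=> k) = k.
Proof.
transitivity (E t (fun=> 1) * k); last by rewrite E_one; ring.
rewrite /E -sumR_scaler; apply: eq_bigr => S _; ring.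
Qed.

Lemma E_phi t : / INR (deg e x0) <= E t phi.
Proof.
elim: t => [|t IH].
- rewrite /E /= sumR_pick /phi big_set1; lra.
- rewrite E_step; apply: (Rle_trans _ _ _ IH).
  apply: sumR_le => S _; apply: Rmult_le_compat_l; first exact: p_ge0.
  rewrite Gdecomp; have := D1_ge0 S; rewrite /D1; lra.
Qed.

Lemma E_sq_bound t : E t (fun S => phi S ^ 2) <= phi setT ^ 2.
Proof.
rewrite -[X in _ <= X](E_const t (phi setT ^ 2)); apply: E_mono => S.
apply: pow_incr; split; [exact: phi_ge0 | exact: phi_leT].
Qed.

Lemma E_sq_step t :
  E t (fun S => phi S ^ 2) + / INR #|T| ^ 4 * E t tr <= E t.+1 (fun S => phi S ^ 2).
Proof.
rewrite E_step /E -sumR_scale -sumR_add; apply: sumR_le => S _.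
apply: (Rle_trans _ (moran_dist e r x0 t S * (phi S ^ 2 + / INR #|T| ^ 4 * tr S))).
  right; ring.
apply: Rmult_le_compat_l; [exact: p_ge0 | exact: G_sq].
Qed.

Lemma tr_ge0 S : 0 <= tr S.
Proof. rewrite /tr; case: (_ && _); lra. Qed.

Lemma small_tr K : 0 < K -> exists t, E t tr <= K.
Proof.
move=> HK; apply: NNPP => H.
have Hall : forall t, K < E t tr.
  move=> t; apply: Rnot_le_lt => h; apply: H; by exists t.
have kp : 0 < / INR #|T| ^ 4 by apply: Rinv_0_lt_compat; apply: pow_lt; exact: nR_pos.
have grow : forall N, INR N * (/ INR #|T| ^ 4 * K) <= E N (fun S => phi S ^ 2).
  elim=> [|N IH].
  - rewrite /= Rmult_0_l /E; apply: sumR_ge0 => S _; apply: Rmult_le_pos;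
      [exact: p_ge0 | apply: pow2_ge_0].
  - rewrite S_INR; have := E_sq_step N; have := Hall N => h1 h2.
    have h3 : / INR #|T| ^ 4 * K <= / INR #|T| ^ 4 * E N tr.
      apply: Rmult_le_compat_l; lra.
    lra.
have [N HN] := INR_archimed (/ INR #|T| ^ 4 * K) (phi setT ^ 2)
  ltac:(apply: Rmult_lt_0_compat; lra).
have := grow N; have := E_sq_bound N; lra.
Qed.

Lemma E_phi_upper t : E t phi <= phi setT * (moran_dist e r x0 t setT + E t tr).
Proof.
have HT := phi_T_pos.
apply: (Rle_trans _ (E t (fun S => phi setT * ((if S == setT then 1 else 0) + tr S)))).
  apply: E_mono => S; case: eqP => [-> | nT].
  - rewrite /tr eqxx andbF; lra.
  - have := tr_ge0 S; case: (S =P set0) => [-> | n0].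
    + have -> : phi set0 = 0 by rewrite /phi big_set0.
      move=> ?; apply: Rmult_le_pos; lra.
    + rewrite /tr; have -> : (S != set0) && (S != setT) by apply/andP; split; apply/eqP.
      have := phi_leT S; lra.
right; rewrite /E -(sumR_pick _ setT (moran_dist e r x0 t)) -sumR_add -sumR_scale.
apply: eq_bigr => S _; set A := (if _ then _ else _); set B := phi _;
  set C := moran_dist _ _ _ _ _; set D := tr _; ring.
Qed.

Lemma p_le1 t : moran_dist e r x0 t setT <= 1.
Proof.
rewrite -(E_one t) /E -(sumR_pick _ setT (moran_dist e r x0 t)).
apply: sumR_le => S _; have := p_ge0 t S; case: (S == setT); lra.
Qed.

Lemma fix_ge t : moran_dist e r x0 t setT <= fixprob_at e r x0.
Proof.
rewrite /fixprob_at.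
set P := fun l => is_lub _ l.
have : P (epsilon (inhabits 0) P).
  apply: epsilon_spec.
  have Hb : bound (fun p => exists t, p = moran_dist e r x0 t setT).
    exists 1 => q [t' ->]; exact: p_le1.
  have Hne : exists q, (fun p => exists t, p = moran_dist e r x0 t setT) q.
    by exists (moran_dist e r x0 0 setT), 0%nat.
  have [m Hm] := completeness _ Hb Hne.
  by exists m.
move=> [ub _]; apply: ub; by exists t.
Qed.

Lemma fix_lower : / INR (deg e x0) / phi setT <= fixprob_at e r x0.
Proof.
have HT := phi_T_pos.
set a := / INR (deg e x0); set f := fixprob_at e r x0.
destruct (Rle_or_lt (a / phi setT) f) as [h|h] => //.
have Kp : 0 < (a / phi setT - f) / 2 by lra.
have [t Ht] := small_tr _ Kp.
have h1 := E_phi t; have h2 := E_phi_upper t; have h3 := fix_ge t.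
fold a in h1; fold f in h3.
have h4 : a <= phi setT * (f + (a / phi setT - f) / 2).
  apply: (Rle_trans _ _ _ h1); apply: (Rle_trans _ _ _ h2).
  apply: Rmult_le_compat_l; lra.
have h5 : a / phi setT <= f + (a / phi setT - f) / 2.
  apply: (Rmult_le_reg_l (phi setT)) => //.
  replace (phi setT * (a / phi setT)) with a by (field; lra); exact: h4.
lra.
Qed.
End Proc.

End M.

Close Scope R_scope.

Theorem lemma1 (T : finType) (e : rel T)
  (e_sym : symmetric e) (e_irr : irreflexive e)
  (e_conn : forall x y : T, connect e x y)
  (n_ge2 : (2 <= #|T|)%N)
  (r : R) (r_ge1 : (1 <= r)%R) :
  (/ INR #|T| <= fixprob e r)%R.
Proof.
have HT := phi_T_pos _ _ e_sym e_conn n_ge2.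
have Hn := nR_pos _ n_ge2.
rewrite /fixprob.
have Hs : (\big[Rplus/0]_x (/ INR (deg e x) / phi T e setT) = 1)%R.
  rewrite sumR_scaler.
  have -> : (\big[Rplus/0]_x / INR (deg e x) = phi T e setT)%R.
    by rewrite /phi; apply: eq_bigl => z; rewrite in_setT.
  field; lra.
apply: (Rle_trans _ (/ INR #|T| * \big[Rplus/0]_x (/ INR (deg e x) / phi T e setT))%R).
  rewrite Hs; lra.
apply: Rmult_le_compat_l.
  apply: Rlt_le; exact: Rinv_0_lt_compat.
apply: sumR_le => x _; exact: fix_lower.
Qed.
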